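(* Let $J\ge 1$ be an integer, let $N_p,N_a$ be positive integers and $P_t,P_a,M,\kappa_B,\kappa_U,\kappa_I,\sigma^2$ be positive reals with $N_p\kappa_I<1$. Set $C_a=P_aN_a\kappa_U^2$ and $C_t=P_tM\kappa_B^2$, and for $l\in\{1,\dots,J\}$ define $$Q(l)=\frac{C_aC_tN_a(N_p\kappa_I)^{2(J-1)}+\sigma^2C_a(N_p\kappa_I)^{2(J-l)}}{C_t(N_p\kappa_I)^{2(l-1)}+\sigma^2}.$$ Then the optimal solution of $\max_{l\in\{1,\dots,J\}}Q(l)$ is $l_2^\star=J$.
   Context: Physical setting (for interpretation): an $M$-antenna base station with transmit power $P_t$ transfers energy to a single-antenna user over a cascaded line-of-sight path through $J$ intelligent reflecting surfaces numbered $1,\dots,J$ in order from the base station; surface $l$ is active ($N_a$ elements, per-element amplification power limit $P_a$) and the others are passive ($N_p$ elements each). $\kappa_B,\kappa_I,\kappa_U$ are the amplitude path gains of the base station–surface 1 link, each inter-surface link, and the surface $J$–user link; $\sigma^2$ is the amplification noise power per active element. With optimal beamforming, the user's received power as a function of the active surface index $l$ is $Q(l)$ above. Standing assumption: $N_p\kappa_I<1$. *)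

(* Defs.v *)
From Stdlib Require Import Reals Lra Lia.
Open Scope R_scope.

Definition Ca (Pa : R) (Na : nat) (kU : R) : R := Pa * INR Na * kU ^ 2.
Definition Ct (Pt M kB : R) : R := Pt * M * kB ^ 2.

Definition Q (J : nat) (Np Na : nat) (Pt Pa M kB kU kI sigma2 : R) (l : nat) : R :=
  let x := INR Np * kI in
  (Ca Pa Na kU * Ct Pt M kB * INR Na * x ^ (2 * (J - 1))
     + sigma2 * Ca Pa Na kU * x ^ (2 * (J - l)))
  / (Ct Pt M kB * x ^ (2 * (l - 1)) + sigma2).

(* Main.v *)
Require Import Defs.
From Stdlib Require Import Reals Lra Lia Psatz.
Open Scope R_scope.

Lemma div_lt_cross a b c d : 0 < b -> 0 < d -> a * d < c * b -> a / b < c / d.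
Proof.
  intros Hb Hd H.
  apply (Rmult_lt_reg_r (b * d)); [nra|].
  replace (a / b * (b * d)) with (a * d) by (field; lra).
  replace (c / d * (b * d)) with (c * b) by (field; lra).
  exact H.
Qed.

Lemma key P C Ct s u v w : 0 < P -> 0 < C -> 0 < Ct -> 0 < s -> 0 < u -> 0 < w -> w < 1 ->
  v = w * u ->
  (P * v + s * C * w) / (Ct * u + s) < (P * v + s * C * 1) / (Ct * v + s).
Proof.
  intros HP HC HCt Hs Hu Hw Hw1 Hv.
  assert (0 < v) by (subst; nra).
  assert (v < u) by (subst; nra).
  apply div_lt_cross; [nra|nra|].
  assert (H1 : s * C * w < s * C * 1) by (apply Rmult_lt_compat_l; nra).
  assert (H2 : Ct * v + s < Ct * u + s) by nra.
  assert (0 < P * v) by (apply Rmult_lt_0_compat; lra).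
  assert (0 < s * C * w) by (apply Rmult_lt_0_compat; [apply Rmult_lt_0_compat|]; lra).
  assert (0 < P * v + s * C * w) by lra.
  apply Rle_lt_trans with ((P * v + s * C * w) * (Ct * u + s)).
  - apply Rmult_le_compat_l; [lra | nra].
  - apply Rmult_lt_compat_r; nra.
Qed.

Theorem proposition2 (J Np Na : nat) (Pt Pa M kB kU kI sigma2 : R) :
  (1 <= J)%nat -> (0 < Np)%nat -> (0 < Na)%nat ->
  0 < Pt -> 0 < Pa -> 0 < M -> 0 < kB -> 0 < kU -> 0 < kI -> 0 < sigma2 ->
  INR Np * kI < 1 ->
  (forall l : nat, (1 <= l <= J)%nat ->
     Q J Np Na Pt Pa M kB kU kI sigma2 l <= Q J Np Na Pt Pa M kB kU kI sigma2 J) /\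
  (forall l : nat, (1 <= l <= J)%nat ->
     Q J Np Na Pt Pa M kB kU kI sigma2 l = Q J Np Na Pt Pa M kB kU kI sigma2 J ->
     l = J).
Proof.
  intros HJ HNp HNa HPt HPa HM HkB HkU HkI Hs Hx.
  assert (Hnp : 0 < INR Np) by (apply lt_0_INR; lia).
  assert (Hna : 0 < INR Na) by (apply lt_0_INR; lia).
  assert (Hx0 : 0 < INR Np * kI) by nra.
  assert (HC : 0 < Ca Pa Na kU) by (unfold Ca; apply Rmult_lt_0_compat; [nra| apply pow_lt; lra]).
  assert (HCt : 0 < Ct Pt M kB) by (unfold Ct; apply Rmult_lt_0_compat; [nra| apply pow_lt; lra]).
  assert (strict : forall l, (1 <= l < J)%nat ->
     Q J Np Na Pt Pa M kB kU kI sigma2 l < Q J Np Na Pt Pa M kB kU kI sigma2 J).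
  { intros l Hl. unfold Q. replace (2 * (J - J))%nat with 0%nat by lia.
    set (x := INR Np * kI) in *.
    apply key.
    - apply Rmult_lt_0_compat; [apply Rmult_lt_0_compat|]; assumption.
    - exact HC.
    - exact HCt.
    - exact Hs.
    - apply pow_lt; lra.
    - apply pow_lt; lra.
    - replace (2 * (J - l))%nat with (S (2 * (J - l) - 1)) by lia.
      rewrite <- tech_pow_Rmult. assert (0 <= x ^ (2 * (J - l) - 1) <= 1).
      { split. apply pow_le; lra. rewrite <- (pow1 (2 * (J - l) - 1)). apply pow_incr; lra. }
      nra.
    - rewrite <- pow_add. f_equal. lia. }
  split.
  - intros l Hl. destruct (Nat.eq_dec l J) as [->|Hne]; [lra|].
    left; apply strict; lia.
  - intros l Hl Heq. destruct (Nat.eq_dec l J) as [->|Hne]; [reflexivity|].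
    exfalso. assert (Hlt := strict l ltac:(lia)). lra.
Qed.
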